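(* Let $G$ be a locally generalized radical group and let $A$ be a minimax-antifinitary $\mathbb{Z}G$-module. Suppose that $G \neq \mathbf{Coc}_{\mathbb{Z}\text{-mmx}}(G)$, $G$ is not finitely generated, and $G/\mathbf{Coc}_{\mathbb{Z}\text{-mmx}}(G)$ is finitely generated. Let $g \in G$ be such that $G = \langle g\rangle \mathbf{Coc}_{\mathbb{Z}\text{-mmx}}(G)$. If $H$ is a normal subgroup of $G$ of finite index, then $H\langle g\rangle = G$, and $G/H$ is a $p$-group, where $p = |G/\mathbf{Coc}_{\mathbb{Z}\text{-mmx}}(G)|$ (which is a prime).
   Context: An $R$-module is minimax if it has a finite series of submodules whose factors are each noetherian or artinian. For a subgroup $H$ of $G$, $C_A(H)$ is the set of elements of $A$ fixed by all of $H$. $\mathbf{Coc}_{\mathbb{Z}\text{-mmx}}(G) = \{x \in G \mid A/C_A(x) \text{ is a minimax } \mathbb{Z}\text{-module}\}$. A $\mathbb{Z}G$-module $A$ is minimax-antifinitary if $A/C_A(H)$ is a minimax $\mathbb{Z}$-module for every proper subgroup $H$ of $G$ that is not finitely generated, while $A/C_A(G)$ is not a minimax $\mathbb{Z}$-module. A group is generalized radical if it has an ascending series whose factors are locally nilpotent or locally finite; it is locally generalized radical if each finitely generated subgroup is generalized radical. *)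

(* Defs.v *)
From Stdlib Require List.
From mathcomp Require Import all_boot all_algebra.
Local Open Scope ring_scope.

Record group := Group {
  gcar :> Type;
  gmul : gcar -> gcar -> gcar;
  gone : gcar;
  ginv : gcar -> gcar;
  gmulA : forall x y z, gmul x (gmul y z) = gmul (gmul x y) z;
  gmul1 : forall x, gmul gone x = x;
  gmulV : forall x, gmul (ginv x) x = gone }.

Arguments gmul {g}.
Arguments gone {g}.
Arguments ginv {g}.

Section GroupDefs.
Variable G : group.

Definition is_subgroup (H : G -> Prop) : Prop :=
  H gone /\ (forall x y, H x -> H y -> H (gmul x y)) /\
  (forall x, H x -> H (ginv x)).

Definition gen (S : G -> Prop) : G -> Prop :=
  fun x => forall K, is_subgroup K -> (forall y, S y -> K y) -> K x.

Definition in_list (l : list G) : G -> Prop := fun x => List.In x l.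

Definition fin_gen_sub (H : G -> Prop) : Prop :=
  exists l : list G, forall x, H x <-> gen (in_list l) x.

Definition fin_gen_group : Prop :=
  exists l : list G, forall x, gen (in_list l) x.

Definition normal_in (N K : G -> Prop) : Prop :=
  forall x y, N x -> K y -> N (gmul (ginv y) (gmul x y)).

Fixpoint gpow (x : G) (n : nat) : G :=
  match n with O => gone | S m => gmul x (gpow x m) end.

Definition comm (x y : G) : G := gmul (ginv x) (gmul (ginv y) (gmul x y)).

Definition lcomm (y0 : G) (ys : list G) : G := List.fold_left comm ys y0.

(* the factor K/N (N normal in K) is locally nilpotent: for every finitely
   generated subgroup <l> of K, <l>N/N is nilpotent (of some class c) *)
Definition loc_nilpotent_factor (K N : G -> Prop) : Prop :=
  forall l : list G, (forall x, List.In x l -> K x) ->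
  exists c : nat, forall (y0 : G) (ys : list G),
    gen (in_list l) y0 -> (forall y, List.In y ys -> gen (in_list l) y) ->
    length ys = c -> N (lcomm y0 ys).

(* the factor K/N is locally finite: for every finite l in K, <l>N/N is finite *)
Definition loc_finite_factor (K N : G -> Prop) : Prop :=
  forall l : list G, (forall x, List.In x l -> K x) ->
  exists r : list G, forall y, gen (in_list l) y ->
    exists z, List.In z r /\ N (gmul (ginv z) y).

(* K (a subgroup of G) is generalized radical: it has an ascending series
   (indexed by a well-ordered set I with least element bot and greatest top,
   continuous at limits) whose factors are locally nilpotent or locally finite *)
Definition gen_radical (K : G -> Prop) : Prop :=
  exists (I : Type) (lt : I -> I -> Prop) (bot top : I) (F : I -> G -> Prop),
    well_founded lt /\
    (forall a b c, lt a b -> lt b c -> lt a c) /\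
    (forall a b, lt a b \/ a = b \/ lt b a) /\
    (forall a, a = bot \/ lt bot a) /\
    (forall a, a = top \/ lt a top) /\
    (forall a, is_subgroup (F a)) /\
    (forall a b x, lt a b -> F a x -> F b x) /\
    (forall x, F bot x <-> x = gone) /\
    (forall x, F top x <-> K x) /\
    (* limit steps: union of the preceding terms *)
    (forall b, b <> bot -> (forall a, ~ (lt a b /\ ~ exists c, lt a c /\ lt c b)) ->
       forall x, F b x -> exists a, lt a b /\ F a x) /\
    (forall a b, lt a b -> ~ (exists c, lt a c /\ lt c b) ->
       normal_in (F a) (F b) /\
       (loc_nilpotent_factor (F b) (F a) \/ loc_finite_factor (F b) (F a))).

Definition loc_gen_radical : Prop :=
  forall l : list G, gen_radical (gen (in_list l)).

Definition finite_index (H : G -> Prop) : Prop :=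
  exists r : list G, forall x, exists z, List.In z r /\ H (gmul (ginv z) x).

Definition index_eq (N : G -> Prop) (p : nat) : Prop :=
  exists r : list G, length r = p /\
    (forall x, exists z, List.In z r /\ N (gmul (ginv z) x)) /\
    (forall i j, (i < p)%N -> (j < p)%N ->
       N (gmul (ginv (List.nth i r gone)) (List.nth j r gone)) -> i = j).

End GroupDefs.

Record ZGmodule (G : group) (A : zmodType) := ZGModule {
  act : G -> A -> A;
  act_add : forall g a b, act g (a + b) = act g a + act g b;
  act_one : forall a, act gone a = a;
  act_mul : forall g h a, act (gmul g h) a = act g (act h a) }.

Arguments act {G A}.

Section ModDefs.
Variable A : zmodType.

Definition zsubgroup (M : A -> Prop) : Prop :=
  M 0 /\ (forall a b, M a -> M b -> M (a + b)) /\ (forall a, M a -> M (- a)).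

Definition noetherian_factor (B C : A -> Prop) : Prop :=
  forall M : nat -> A -> Prop,
    (forall n, zsubgroup (M n) /\ (forall a, C a -> M n a) /\
               (forall a, M n a -> B a) /\ (forall a, M n a -> M n.+1 a)) ->
    exists N, forall n, (N <= n)%N -> forall a, M n a <-> M N a.

Definition artinian_factor (B C : A -> Prop) : Prop :=
  forall M : nat -> A -> Prop,
    (forall n, zsubgroup (M n) /\ (forall a, C a -> M n a) /\
               (forall a, M n a -> B a) /\ (forall a, M n.+1 a -> M n a)) ->
    exists N, forall n, (N <= n)%N -> forall a, M n a <-> M N a.

(* A/C is a minimax Z-module: a finite series C = M_0 <= ... <= M_n = A
   of subgroups with each factor noetherian or artinian *)
Definition minimax_quot (C : A -> Prop) : Prop :=
  exists (n : nat) (M : nat -> A -> Prop),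
    (forall i, zsubgroup (M i)) /\
    (forall a, M 0%N a <-> C a) /\
    (forall a, M n a) /\
    (forall i, (i < n)%N ->
       (forall a, M i a -> M i.+1 a) /\
       (noetherian_factor (M i.+1) (M i) \/ artinian_factor (M i.+1) (M i))).
End ModDefs.

Section CocDefs.
Variables (G : group) (A : zmodType) (V : ZGmodule G A).

Definition cent (H : G -> Prop) : A -> Prop :=
  fun a => forall h, H h -> act V h a = a.

Definition Coc : G -> Prop :=
  fun x => @minimax_quot A (cent (fun y => y = x)).

Definition minimax_antifinitary : Prop :=
  (forall H : G -> Prop, @is_subgroup G H -> (exists x, ~ H x) ->
     ~ @fin_gen_sub G H -> @minimax_quot A (cent H)) /\
  ~ @minimax_quot A (cent (fun _ => True)).
End CocDefs.

Arguments is_subgroup {G}.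
Arguments gen {G}.
Arguments in_list {G}.
Arguments fin_gen_sub {G}.
Arguments normal_in {G}.
Arguments gpow {G}.
Arguments finite_index {G}.
Arguments index_eq {G}.
Arguments cent {G A}.
Arguments Coc {G A}.
Arguments minimax_antifinitary {G A}.

(* Main.v *)
Require Import Defs.
From Stdlib Require List.
From mathcomp Require Import all_boot all_algebra.
From Stdlib Require Import Classical ClassicalEpsilon.
From mathcomp Require Import zify.
Import GRing.Theory.

Section Mod.
Variable A : zmodType.
Local Open Scope ring_scope.

Definition sub (X Y : A -> Prop) := forall a, X a -> Y a.
Definition ivl (B C X : A -> Prop) := zsubgroup A X /\ sub C X /\ sub X B.

Lemma transfer_gen (B C B' C' : A -> Prop) (f : (A -> Prop) -> (A -> Prop))
  (M : nat -> A -> Prop) :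
  (forall X, ivl B' C' X -> ivl B C (f X)) ->
  (forall X Y, ivl B' C' X -> ivl B' C' Y -> sub X Y -> sub (f X) (f Y)) ->
  (forall X Y, ivl B' C' X -> ivl B' C' Y -> sub (f X) (f Y) -> sub X Y) ->
  (forall n, ivl B' C' (M n)) ->
  (exists N, forall n, (N <= n)%N -> forall a, f (M n) a <-> f (M N) a) ->
  exists N, forall n, (N <= n)%N -> forall a, M n a <-> M N a.
Proof.
move=> hI hM hR hMi [N hN]; exists N => n hn.
have H1 : sub (M n) (M N).
  apply: (hR _ _ (hMi n) (hMi N)) => b; by move/(hN n hn b).
have H2 : sub (M N) (M n).
  apply: (hR _ _ (hMi N) (hMi n)) => b; by move/(hN n hn b).
by move=> a; split; [apply: H1 | apply: H2].
Qed.

Arguments transfer_gen {B C B' C' f M}.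
Lemma transfer_noeth (B C B' C' : A -> Prop) (f : (A -> Prop) -> (A -> Prop)) :
  (forall X, ivl B' C' X -> ivl B C (f X)) ->
  (forall X Y, ivl B' C' X -> ivl B' C' Y -> sub X Y -> sub (f X) (f Y)) ->
  (forall X Y, ivl B' C' X -> ivl B' C' Y -> sub (f X) (f Y) -> sub X Y) ->
  noetherian_factor A B C -> noetherian_factor A B' C'.
Proof.
move=> hI hM hR hN M hMs.
have hMi : forall n, ivl B' C' (M n).
  by move=> n; case: (hMs n) => [a [b [c _]]]; split.
apply: (transfer_gen hI hM hR hMi).
apply: hN => n; have [s1 [s2 s3]] := hI _ (hMi n); do !split => //.
apply: hM => //; by case: (hMs n) => [_ [_ [_ ?]]].
Qed.

Lemma transfer_art (B C B' C' : A -> Prop) (f : (A -> Prop) -> (A -> Prop)) :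
  (forall X, ivl B' C' X -> ivl B C (f X)) ->
  (forall X Y, ivl B' C' X -> ivl B' C' Y -> sub X Y -> sub (f X) (f Y)) ->
  (forall X Y, ivl B' C' X -> ivl B' C' Y -> sub (f X) (f Y) -> sub X Y) ->
  artinian_factor A B C -> artinian_factor A B' C'.
Proof.
move=> hI hM hR hN M hMs.
have hMi : forall n, ivl B' C' (M n).
  by move=> n; case: (hMs n) => [a [b [c _]]]; split.
apply: (transfer_gen hI hM hR hMi).
apply: hN => n; have [s1 [s2 s3]] := hI _ (hMi n); do !split => //.
apply: hM => //; by case: (hMs n) => [_ [_ [_ ?]]].
Qed.

Arguments transfer_noeth {B C B' C' f}.
Arguments transfer_art {B C B' C' f}.
Lemma transfer_na (B C B' C' : A -> Prop) (f : (A -> Prop) -> (A -> Prop)) :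
  (forall X, ivl B' C' X -> ivl B C (f X)) ->
  (forall X Y, ivl B' C' X -> ivl B' C' Y -> sub X Y -> sub (f X) (f Y)) ->
  (forall X Y, ivl B' C' X -> ivl B' C' Y -> sub (f X) (f Y) -> sub X Y) ->
  noetherian_factor A B C \/ artinian_factor A B C ->
  noetherian_factor A B' C' \/ artinian_factor A B' C'.
Proof.
move=> h1 h2 h3 [h|h]; [left; exact: (transfer_noeth h1 h2 h3) | right; exact: (transfer_art h1 h2 h3)].
Qed.

Arguments transfer_na {B C B' C'} f.
Lemma na_ext (B C B' C' : A -> Prop) :
  (forall a, B a <-> B' a) -> (forall a, C a <-> C' a) ->
  noetherian_factor A B C \/ artinian_factor A B C ->
  noetherian_factor A B' C' \/ artinian_factor A B' C'.
Proof.
move=> hB hC; apply: (transfer_na id) => //.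
move=> X [s1 [s2 s3]]; split => //; split=> a.
  by move/hC/s2. by move/s3/hB.
Qed.

Definition ser (C B : A -> Prop) := exists n (M : nat -> A -> Prop),
  (forall i, zsubgroup A (M i)) /\ (forall a, M 0%N a <-> C a) /\ (forall a, M n a <-> B a) /\
  (forall i, (i < n)%N -> sub (M i) (M i.+1) /\
     (noetherian_factor A (M i.+1) (M i) \/ artinian_factor A (M i.+1) (M i))).

Lemma ser_mmx C : ser C (fun _ => True) <-> minimax_quot A C.
Proof.
split=> [[n [M [h1 [h2 [h3 h4]]]]] | [n [M [h1 [h2 [h3 h4]]]]]]; exists n, M; do !split => //.
all: try by move=> a; apply/h3.
all: try by move=> i /h4 [].
Qed.

Lemma ser_cat C B E : ser C B -> ser B E -> ser C E.
Proof.
move=> [n1 [P [p1 [p2 [p3 p4]]]]] [n2 [Q [q1 [q2 [q3 q4]]]]].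
exists (n1 + n2)%N, (fun i => if (i < n1)%N then P i else Q (i - n1)%N).
split; first by move=> i; case: ifP.
split.
  case: ifP => // h a. move: h; rewrite lt0n => /negbFE/eqP h0.
  by rewrite q2 -p3 h0 p2.
split.
  rewrite ltnNge leq_addr /= => a; by rewrite addKn q3.
move=> i hi; cbv beta. case: (ltnP i.+1 n1) => h.
  rewrite (ltnW h). by case: (p4 i (ltnW h)).
case: (ltnP i n1) => h'.
  have ei : i.+1 = n1 by apply/eqP; rewrite eqn_leq h h'.
  rewrite -ei subnn.
  have := p4 i h' => -[s n]; split.
    by move=> a /s; rewrite ei q2 p3.
  by apply: (na_ext _ _ _ _ _ _ n) => a //; rewrite ei q2 p3.
rewrite subSn //.
apply: q4. by rewrite ltn_subLR.
Qed.


Lemma ser_mono C B C' : ser C B -> zsubgroup A C' -> sub C C' -> sub C' B -> ser C' B.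
Proof.
case=> n [M [h1 [h2 [h3 h4]]]] [c0 [cD cN]] sCC sCB.
have hB : zsubgroup A B.
  have [z [d e]] := h1 n; split; first by apply/h3.
  split; first by move=> a b /h3 ha /h3 hb; apply/h3; apply: d.
  by move=> a /h3 ha; apply/h3; apply: e.
exists n, (fun i a => exists m c, M i m /\ C' c /\ a = m + c).
split.
  move=> i; have [z [d e]] := h1 i; split; first by exists 0, 0; rewrite addr0.
  split.
    move=> a b [m1 [c1 [? [? ->]]]] [m2 [c2 [? [? ->]]]].
    exists (m1 + m2), (c1 + c2); do !split; [exact: d | exact: cD | by rewrite addrACA].
  move=> a [m [c [? [? ->]]]]; exists (- m), (- c); do !split; [exact: e | exact: cN | by rewrite opprD].
split.
  move=> a; split.
    by move=> [m [c [/h2 /sCC ? [? ->]]]]; apply: cD.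
  move=> ha; exists 0, a; do !split => //; [by have [] := h1 0%N | by rewrite add0r].
split.
  move=> a; split.
    by move=> [m [c [/h3 ? [/sCB ? ->]]]]; case: hB => _ [+ _]; apply.
  move=> ha; exists a, 0; do !split => //; [by apply/h3 | by rewrite addr0].
move=> i hi; have [s na] := h4 i hi; split.
  by move=> a [m [c [/s ? [? ->]]]]; exists m, c.
apply: (transfer_na (fun X a => X a /\ M i.+1 a)) na.
- move=> X [[x0 [xD xN]] [sX1 sX2]]; have [z [d e]] := h1 i.+1.
  split; first split; first by [].
    split; first by move=> a b [? ?] [? ?]; split; [apply: xD | apply: d].
    by move=> a [? ?]; split; [apply: xN | apply: e].
  split; last by move=> a [].
  move=> a ha; split; last by apply: s.
  by apply: sX1; exists a, 0; do !split => //; rewrite addr0.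
- by move=> X Y _ _ sXY a [? ?]; split => //; apply: sXY.
- move=> X Y [[x0 [xD xN]] [sX1 sX2]] [[y0 [yD yN]] [sY1 sY2]] sf a Xa.
  have [m [c [Mm [Cc ea]]]] := sX2 a Xa.
  have Xc : X c by apply: sX1; exists 0, c; do !split => //; [by have [] := h1 i | by rewrite add0r].
  have Yc : Y c by apply: sY1; exists 0, c; do !split => //; [by have [] := h1 i | by rewrite add0r].
  have Xm : X m by have := xD _ _ Xa (xN _ Xc); rewrite ea addrK.
  have [Ym _] := sf m (conj Xm Mm).
  by rewrite ea; apply: yD.
Qed.

Lemma ser_cap C1 C2 : ser C1 (fun _ => True) -> zsubgroup A C2 ->
  ser (fun a => C1 a /\ C2 a) C2.
Proof.
case=> n [M [h1 [h2 [h3 h4]]]] [c0 [cD cN]].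
exists n, (fun i a => M i a /\ C2 a).
split.
  move=> i; have [z [d e]] := h1 i; split; first by [].
  split; first by move=> a b [? ?] [? ?]; split; [apply: d | apply: cD].
  by move=> a [? ?]; split; [apply: e | apply: cN].
split; first by move=> a; rewrite h2.
split; first by move=> a; split; [case | move=> ?; split => //; apply/h3].
move=> i hi; have [s na] := h4 i hi; split.
  by move=> a [/s ? ?].
apply: (transfer_na (fun X a => exists x m, X x /\ M i m /\ a = x + m)) na.
- move=> X [[x0 [xD xN]] [sX1 sX2]]; have [z [d e]] := h1 i.+1; have [zi [di ei]] := h1 i.
  split; first split; first by exists 0, 0; rewrite addr0.
    split.
      move=> a b [x1 [m1 [? [? ->]]]] [x2 [m2 [? [? ->]]]].
      exists (x1 + x2), (m1 + m2); do !split; [exact: xD | exact: di | by rewrite addrACA].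
    move=> a [x [m [? [? ->]]]]; exists (- x), (- m); do !split; [exact: xN | exact: ei | by rewrite opprD].
  split; first by move=> a ha; exists 0, a; do !split => //; rewrite add0r.
  move=> a [x [m [/sX2 [Mx _] [/s Mm ->]]]]; exact: d.
- move=> X Y _ _ sXY a [x [m [? [? ->]]]]; exists x, m; do !split => //; exact: sXY.
- move=> X Y [[x0 [xD xN]] [sX1 sX2]] [[y0 [yD yN]] [sY1 sY2]] sf a Xa.
  have [y [m [Yy [Mm ea]]]] : exists x m, Y x /\ M i m /\ a = x + m.
    by apply: sf; exists a, 0; do !split => //; [by have [] := h1 i | by rewrite addr0].
  have [_ C2a] := sX2 a Xa; have [_ C2y] := sY2 y Yy.
  have C2m : C2 m by have := cD _ _ (cN _ C2y) C2a; rewrite ea addKr.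
  have Ym : Y m by apply: sY1; split.
  by rewrite ea; apply: yD.
Qed.

Lemma ser_transport C (phi psi : A -> A) :
  (forall a b, phi (a + b) = phi a + phi b) -> (forall a b, psi (a + b) = psi a + psi b) ->
  phi 0 = 0 -> psi 0 = 0 -> (forall a, phi (- a) = - phi a) -> (forall a, psi (- a) = - psi a) ->
  (forall a, phi (psi a) = a) -> (forall a, psi (phi a) = a) ->
  ser C (fun _ => True) -> ser (fun a => C (phi a)) (fun _ => True).
Proof.
move=> fD gD f0 g0 fN gN fg gf [n [M [h1 [h2 [h3 h4]]]]].
exists n, (fun i a => M i (phi a)).
split.
  move=> i; have [z [d e]] := h1 i; split; first by rewrite f0.
  split; first by move=> a b ? ?; rewrite fD; apply: d.
  by move=> a ?; rewrite fN; apply: e.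
split; first by move=> a; rewrite h2.
split; first by move=> a; split => // _; apply/h3.
move=> i hi; have [s na] := h4 i hi; split.
  by move=> a /s.
apply: (transfer_na (fun X b => X (psi b))) na.
- move=> X [[x0 [xD xN]] [sX1 sX2]].
  split; first split; first by rewrite g0.
    split; first by move=> a b ? ?; rewrite gD; apply: xD.
    by move=> a ?; rewrite gN; apply: xN.
  split; first by move=> a ha; apply: sX1; rewrite fg.
  by move=> a /sX2; rewrite fg.
- by move=> X Y _ _ sXY a; apply: sXY.
- move=> X Y _ _ sf a Xa; have := sf (phi a); rewrite gf; by apply.
Qed.

End Mod.
Arguments ser_cap {A C1 C2}.
Arguments ser_cat {A C B E}.
Arguments ser_mono {A C B C'}.
Arguments ser_transport {A C phi psi}.
Arguments ser_mmx {A} C.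

Arguments gmulA {g}.
Arguments gmul1 {g}.
Arguments gmulV {g}.

Section Grp.
Variable G : group.
Implicit Types x y z : G.

Lemma gmulVr x : gmul x (ginv x) = gone.
Proof.
have e : gmul x (ginv x) = gmul (gmul (ginv (ginv x)) (ginv x)) (gmul x (ginv x)) by rewrite gmulV gmul1.
by rewrite e -gmulA (gmulA (ginv x) x) gmulV gmul1 gmulV.
Qed.

Lemma gmulr1 x : gmul x gone = x.
Proof. by rewrite -(gmulV x) gmulA gmulVr gmul1. Qed.

Lemma gmulKg x y : gmul (ginv x) (gmul x y) = y.
Proof. by rewrite gmulA gmulV gmul1. Qed.
Lemma gmulKVg x y : gmul x (gmul (ginv x) y) = y.
Proof. by rewrite gmulA gmulVr gmul1. Qed.
Lemma gmulgK x y : gmul (gmul x y) (ginv y) = x.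
Proof. by rewrite -gmulA gmulVr gmulr1. Qed.
Lemma gmulgKV x y : gmul (gmul x (ginv y)) y = x.
Proof. by rewrite -gmulA gmulV gmulr1. Qed.

Lemma ginv_uniq x y : gmul x y = gone -> y = ginv x.
Proof. by move=> e; rewrite -(gmulKg x y) e gmulr1. Qed.

Lemma ginvK x : ginv (ginv x) = x.
Proof. by symmetry; apply: ginv_uniq; rewrite gmulV. Qed.

Lemma ginvM x y : ginv (gmul x y) = gmul (ginv y) (ginv x).
Proof. by symmetry; apply: ginv_uniq; rewrite -gmulA gmulKVg gmulVr. Qed.

Lemma ginv1 : ginv (gone : G) = gone.
Proof. by symmetry; apply: ginv_uniq; rewrite gmul1. Qed.

Lemma gen_sub (S : G -> Prop) : is_subgroup (gen S).
Proof.
split; first by move=> K [].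
split; first by move=> x y hx hy K hK hS; have [_ [m _]] := hK; apply: m; [apply: hx | apply: hy].
by move=> x hx K hK hS; have [_ [_ i]] := hK; apply: i; apply: hx.
Qed.

Lemma gen_in (S : G -> Prop) x : S x -> gen S x.
Proof. by move=> hx K _ hS; apply: hS. Qed.

Lemma gen_min (S K : G -> Prop) : is_subgroup K -> (forall y, S y -> K y) ->
  forall x, gen S x -> K x.
Proof. by move=> hK hS x hx; apply: hx. Qed.

Lemma gen_mono (S T : G -> Prop) x : (forall y, S y -> T y) -> gen S x -> gen T x.
Proof. by move=> hST hx K hK hT; apply: hx => // y /hST /hT. Qed.

Lemma gpowD x m n : gpow x (m + n) = gmul (gpow x m) (gpow x n).
Proof. by elim: m => [|m IH] /=; rewrite ?gmul1 // IH gmulA. Qed.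

Lemma gpow1 x : gpow x 1 = x.
Proof. by rewrite /= gmulr1. Qed.

Local Open Scope ring_scope.
Definition zpow x (z : int) : G :=
  match z with Posz n => gpow x n | Negz n => ginv (gpow x n.+1) end.

Lemma zpowS x (z : int) : zpow x (z + 1) = gmul (zpow x z) x.
Proof.
case: z => n.
  have -> : (n%:Z + 1 = (n + 1)%N%:Z)%R by rewrite PoszD.
  by rewrite /= gpowD gpow1.
case: n => [|n].
  have -> : (Negz 0 + 1 = 0)%R by [].
  by rewrite /= gmulr1 gmulV.
have -> : (Negz n.+1 + 1 = Negz n)%R by rewrite !NegzE -addn1 PoszD opprD addrK.
rewrite /=.
by rewrite [ginv (gmul x (gmul x _))]ginvM gmulgKV.
Qed.

Lemma zpowB1 x (z : int) : zpow x (z - 1) = gmul (zpow x z) (ginv x).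
Proof. by rewrite -{2}(subrK 1 z) zpowS gmulgK. Qed.

Lemma zpow0 x : zpow x 0 = gone.
Proof. by []. Qed.

Lemma zpowD x (a b : int) : zpow x (a + b) = gmul (zpow x a) (zpow x b).
Proof.
have hp : forall n : nat, zpow x (a + n%:Z) = gmul (zpow x a) (zpow x n%:Z).
  elim=> [|n IH]; first by rewrite addr0 /= gmulr1.
  by rewrite -addn1 PoszD addrA !zpowS IH gmulA.
have hn : forall n : nat, zpow x (a - n%:Z) = gmul (zpow x a) (zpow x (- n%:Z)).
  elim=> [|n IH]; first by rewrite subr0 /= gmulr1.
  by rewrite -addn1 PoszD opprD addrA !zpowB1 IH gmulA.
case: b => n; first exact: hp.
by rewrite NegzE hn.
Qed.

Lemma zpowN x (a : int) : zpow x (- a) = ginv (zpow x a).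
Proof. by apply: ginv_uniq; rewrite -zpowD subrr. Qed.

Lemma zpow1 x : zpow x 1 = x.
Proof. exact: gpow1. Qed.

Lemma gpow_zpow x n : gpow x n = zpow x n%:Z.
Proof. by []. Qed.

Lemma gpow_zpowM x (a : int) n : gpow (zpow x a) n = zpow x (a * n%:Z).
Proof.
elim: n => [|n IH]; first by rewrite mulr0.
by rewrite /= IH -addn1 PoszD mulrDr mulr1 addrC zpowD.
Qed.

Lemma zpowM x (a b : int) : zpow (zpow x a) b = zpow x (a * b).
Proof.
case: b => n; first exact: gpow_zpowM.
change (ginv (gpow (zpow x a) n.+1) = zpow x (a * Negz n)).
by rewrite gpow_zpowM -zpowN NegzE mulrN.
Qed.

Lemma zpow_gen x (z : int) : gen (fun y => y = x) (zpow x z).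
Proof.
have [h1 [hm hi]] := gen_sub (fun y => y = x).
have hx : gen (fun y => y = x) x by apply: gen_in.
have hp : forall n, gen (fun y => y = x) (gpow x n) by elim=> [|n IH] //=; exact: hm _ _ hx IH.
by case: z => n; [exact: hp | exact: hi _ (hp _)].
Qed.

Lemma gen_zpow x y : gen (fun z => z = x) y -> exists k, y = zpow x k.
Proof.
move=> hy; apply: (gen_min _ (fun y => exists k, y = zpow x k) _ _ _ hy); last by move=> _ ->; exists 1; rewrite zpow1.
split; first by exists 0.
split; first by move=> a b [k ->] [l ->]; exists (k + l); rewrite zpowD.
by move=> a [k ->]; exists (- k); rewrite zpowN.
Qed.

End Grp.
Arguments gmulVr {G}.
Arguments gmulr1 {G}.
Arguments gmulKg {G}.
Arguments gmulKVg {G}.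
Arguments gmulgK {G}.
Arguments gmulgKV {G}.
Arguments ginv_uniq {G}.
Arguments ginvK {G}.
Arguments ginvM {G}.
Arguments ginv1 {G}.
Arguments gen_sub {G}.
Arguments gen_in {G}.
Arguments gen_min {G}.
Arguments gen_mono {G}.
Arguments gpowD {G}.
Arguments gpow1 {G}.
Arguments zpow {G}.
Arguments zpowS {G}.
Arguments zpowB1 {G}.
Arguments zpow0 {G}.
Arguments zpowD {G}.
Arguments zpowN {G}.
Arguments zpow1 {G}.
Arguments gpow_zpow {G}.
Arguments gpow_zpowM {G}.
Arguments zpowM {G}.
Arguments zpow_gen {G}.
Arguments gen_zpow {G}.

Section CocL.
Variables (G : group) (A : zmodType) (V : ZGmodule G A).
Local Open Scope ring_scope.

Lemma act0 h : act V h 0 = 0.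
Proof.
have e : act V h 0 + act V h 0 = act V h 0 + 0 by rewrite -act_add !addr0.
exact: addrI e.
Qed.

Lemma actN h a : act V h (- a) = - act V h a.
Proof. by apply: (addrI (act V h a)); rewrite -act_add !subrr act0. Qed.

Lemma act_inv h a : act V (ginv h) (act V h a) = a.
Proof. by rewrite -act_mul gmulV act_one. Qed.

Lemma act_invV h a : act V h (act V (ginv h) a) = a.
Proof. by rewrite -act_mul gmulVr act_one. Qed.

Lemma cent_zsub K : zsubgroup A (cent V K).
Proof.
split; first by move=> h _; rewrite act0.
split; first by move=> a b ha hb h hh; rewrite act_add ha ?hb.
by move=> a ha h hh; rewrite actN ha.
Qed.

Lemma mmx_ext C C' : minimax_quot A C -> (forall a, C a <-> C' a) -> minimax_quot A C'.
Proof.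
move=> [n [M [h1 [h2 [h3 h4]]]]] e; exists n, M; split => //; split => //.
by move=> a; rewrite h2.
Qed.

Lemma Coc1 : Coc V gone.
Proof.
exists 0%N, (fun _ _ => True); split => //; split; last by split.
by move=> a; split => // _ h ->; rewrite act_one.
Qed.

Lemma CocV x : Coc V x -> Coc V (ginv x).
Proof.
move=> hx; apply: (mmx_ext _ _ hx) => a; split.
  by move=> h _ ->; rewrite -{1}(h x erefl) act_inv.
by move=> h _ ->; rewrite -{1}(h (ginv x) erefl) act_invV.
Qed.

Lemma CocM x y : Coc V x -> Coc V y -> Coc V (gmul x y).
Proof.
move=> hx hy.
have s1 := ser_cap (proj2 (ser_mmx _) hx) (cent_zsub (fun z => z = y)).
have s2 := proj2 (ser_mmx _) hy.
have s3 := ser_cat s1 s2.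
apply/ser_mmx; apply: (ser_mono s3 (cent_zsub _)) => // a [ha hb] _ ->.
by rewrite act_mul (hb y erefl) (ha x erefl).
Qed.

Lemma CocJ x y : Coc V x -> Coc V (gmul (ginv y) (gmul x y)).
Proof.
move=> hx.
have s := ser_transport (@act_add _ _ V y) (@act_add _ _ V (ginv y)) (act0 y) (act0 (ginv y))
   (actN y) (actN (ginv y)) (act_invV y) (act_inv y) (proj2 (ser_mmx _) hx).
move/ser_mmx: s => s; apply: (mmx_ext _ _ s) => a; split.
  by move=> h _ ->; rewrite !act_mul (h x erefl) act_inv.
move=> h _ ->; have := h _ erefl; rewrite !act_mul => e.
by have := f_equal (act V y) e; rewrite act_invV.
Qed.

Lemma Coc_sub : is_subgroup (Coc V).
Proof.
split; first exact: Coc1.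
split; first exact: CocM.
exact: CocV.
Qed.

Lemma cent_Coc (K : G -> Prop) x : minimax_quot A (cent V K) -> K x -> Coc V x.
Proof.
move=> hK Kx; apply/ser_mmx; apply: (ser_mono (proj2 (ser_mmx _) hK) (cent_zsub _)) => //.
by move=> a ha _ ->; apply: ha.
Qed.

End CocL.

Lemma ex_min (Q : nat -> Prop) : (exists n, Q n) -> exists n, Q n /\ forall m, (m < n)%N -> ~ Q m.
Proof.
move=> [n Qn].
suff : forall N n, (n <= N)%N -> Q n -> exists n, Q n /\ forall m, (m < n)%N -> ~ Q m.
  by move=> h; apply: (h n n).
elim=> [|N IH] k hk Qk.
  by exists k; split => // m; move: hk; rewrite leqn0 => /eqP ->; rewrite ltn0.
case: (classic (exists m, (m < k)%N /\ Q m)) => [[m [hm Qm]]|hno].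
  apply: (IH m) => //; by rewrite -ltnS (leq_trans hm hk).
by exists k; split => // m hm Qm; apply: hno; exists m.
Qed.

Local Open Scope ring_scope.

Lemma int_gen (P : int -> Prop) : P 0 -> (forall a b, P a -> P b -> P (a + b)) ->
  (forall a, P a -> P (- a)) -> (exists w, w != 0 /\ P w) ->
  exists m : nat, (0 < m)%N /\ (forall z, P z <-> (m%:Z %| z)%Z).
Proof.
move=> P0 PD PN [w [w0 Pw]].
have Pn : forall a (n : nat), P a -> P (a * n%:Z).
  move=> a n Pa; elim: n => [|n IH]; first by rewrite mulr0.
  by rewrite -addn1 PoszD mulrDr mulr1; apply: PD.
have PM : forall a k, P a -> P (a * k).
  move=> a [] n Pa; first exact: Pn.
  by rewrite NegzE mulrN; apply: PN; apply: Pn.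
have [m [[m0 Pm] mmin]] : exists m, ((0 < m)%N /\ P m%:Z) /\ forall k, (k < m)%N -> ~ ((0 < k)%N /\ P k%:Z).
  apply: ex_min; case: w w0 Pw => n.
    by move=> n0 Pw; exists n; split => //; rewrite lt0n; move: n0; apply: contra => /eqP ->.
  by move=> _ Pw; exists n.+1; split => //; move: (PN _ Pw); rewrite NegzE opprK.
exists m; split => // z; split.
  move=> Pz; apply/dvdz_mod0P.
  have hr : P (z %% m%:Z)%Z.
    have -> : (z %% m%:Z)%Z = z + (- (z %/ m%:Z)%Z) * m%:Z by rewrite mulNr {2}(divz_eq z m%:Z) [_ * _ + _]addrC addrK.
    by apply: PD => //; rewrite mulrC; apply: PM.
  have mz : m%:Z != 0 by rewrite -lt0n.
  have [k ek] : exists k : nat, (z %% m%:Z)%Z = k%:Z.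
    by exists `|(z %% m%:Z)%Z|%N; rewrite gez0_abs // modz_ge0.
  have hk : (k < m)%N by rewrite -ltz_nat -ek ltz_pmod // ltz_nat.
  rewrite ek; case: k ek hk => // k ek hk; exfalso; apply: (mmin k.+1 hk); split => //.
  by rewrite -ek.
by move=> /dvdzP [q ->]; rewrite mulrC; apply: PM.
Qed.

Section Main.
Variable G : group.

Lemma fg_lift (K : G -> Prop) (l' : list G) : fin_gen_sub K ->
  (forall x, gen (fun y => in_list l' y \/ K y) x) -> fin_gen_group G.
Proof.
move=> [l hl] hx; exists (l' ++ l)%list => x.
apply: (gen_min _ _ (gen_sub _) _ x (hx x)) => y [hy|hy].
  by apply: gen_in; apply: List.in_or_app; left.
apply: (gen_mono (in_list l)); last by apply/hl.
by move=> u hu; apply: List.in_or_app; right.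
Qed.

Lemma key (A : zmodType) (V : ZGmodule G A) (K : G -> Prop) (l' : list G) :
  minimax_antifinitary V -> ~ fin_gen_group G -> is_subgroup K ->
  (forall x, gen (fun y => in_list l' y \/ K y) x) ->
  (forall x, K x) \/ (forall x, K x -> Coc V x).
Proof.
move=> [anti _] nfg hK hx.
case: (classic (forall x, K x)) => [h|h]; [by left | right].
have [x0 nx0] := not_all_ex_not _ _ h.
have nfK : ~ fin_gen_sub K by move=> f; exact: nfg (fg_lift _ _ f hx).
move=> x Kx; exact: (@cent_Coc _ _ _ _ _ (anti K hK (ex_intro _ x0 nx0) nfK) Kx).
Qed.

Definition nprod (N : G -> Prop) (y : G) : G -> Prop :=
  fun x => exists c z, N c /\ x = gmul c (zpow y z).

Lemma nprod_sub (N : G -> Prop) y : is_subgroup N -> normal_in N (fun _ => True) ->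
  is_subgroup (nprod N y).
Proof.
move=> [N1 [NM NV]] Nn.
split; first by exists gone, 0; split => //; rewrite gmulr1.
split.
  move=> a b [c1 [z1 [N1c ->]]] [c2 [z2 [N2c ->]]].
  have hw := Nn c2 (ginv (zpow y z1)) N2c I; rewrite ginvK in hw.
  exists (gmul c1 (gmul (zpow y z1) (gmul c2 (ginv (zpow y z1))))), (z1 + z2).
  split; first by apply: NM.
  by rewrite zpowD -!gmulA gmulKg.
move=> a [c [z [Nc ->]]].
have hw := Nn (ginv c) (zpow y z) (NV _ Nc) I.
exists (gmul (ginv (zpow y z)) (gmul (ginv c) (zpow y z))), (- z); split => //.
by rewrite zpowN ginvM -!gmulA gmulVr gmulr1.
Qed.

Lemma nprod_N (N : G -> Prop) y c : N c -> nprod N y c.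
Proof. by move=> Nc; exists c, 0; split => //; rewrite gmulr1. Qed.

Lemma nprod_y (N : G -> Prop) y : is_subgroup N -> nprod N y y.
Proof. by move=> [N1 _]; exists gone, 1; rewrite zpow1 gmul1. Qed.

Lemma pow_coset (N : G -> Prop) c y n : is_subgroup N -> normal_in N (fun _ => True) ->
  N c -> N (gmul (gpow (gmul c y) n) (ginv (gpow y n))).
Proof.
move=> [N1 [NM NV]] Nn Nc; elim: n => [|n IH]; first by rewrite /= ginv1 gmul1.
have hw := Nn _ (ginv y) IH I; rewrite ginvK in hw.
have := NM _ _ Nc hw.
by rewrite /= ginvM -!gmulA.
Qed.

End Main.
Arguments fg_lift {G}.
Arguments key {G A V}.
Arguments nprod {G}.
Arguments nprod_sub {G N}.
Arguments nprod_N {G N}.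
Arguments nprod_y {G N}.
Arguments pow_coset {G N}.

Lemma pigeon (G : group) (H : G -> Prop) (g : G) (r : list G) : is_subgroup H ->
  (forall x, exists z, List.In z r /\ H (gmul (ginv z) x)) ->
  exists w : int, w != 0 /\ H (zpow g w).
Proof.
move=> [_ [HM HV]] hr.
set N := length r.
have hex : forall i : 'I_N.+1, exists k : 'I_N, H (gmul (ginv (List.nth k r gone)) (gpow g i)).
  move=> i; have [z [zr hz]] := hr (gpow g i).
  have [k [kN kz]] := List.In_nth r z gone zr.
  have kN' : (k < N)%N by apply/ltP.
  by exists (Ordinal kN'); rewrite /= kz.
pose f i := proj1_sig (constructive_indefinite_description _ (hex i)).
have hf : forall i, H (gmul (ginv (List.nth (f i) r gone)) (gpow g i)) :=
  fun i => proj2_sig (constructive_indefinite_description _ (hex i)).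
have ninj : ~ injective f.
  by move=> inj; have := leq_card f inj; rewrite !card_ord ltnn.
have [i [j [fij nij]]] : exists i j, f i = f j /\ i <> j.
  apply: NNPP => hn; apply: ninj => i j fij; apply: NNPP => nij; apply: hn; by exists i, j.
exists (j%:Z - i%:Z); split.
  apply/negP; rewrite subr_eq0 => /eqP [e]; apply: nij; apply: val_inj => /=; by rewrite e.
have := HM _ _ (HV _ (hf i)) (hf j); rewrite fij.
rewrite ginvM ginvK -gmulA gmulKVg !gpow_zpow.
by rewrite addrC zpowD zpowN.
Qed.
Local Open Scope ring_scope.

Lemma main_aux (G : group) (A : zmodType) (V : ZGmodule G A)
  (g : G) (H : G -> Prop) :
  minimax_antifinitary V ->
  (exists x, ~ Coc V x) ->
  ~ fin_gen_group G ->
  (forall x, exists y c, gen (fun z => z = g) y /\ Coc V c /\ x = gmul y c) ->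
  is_subgroup H -> normal_in H (fun _ => True) -> finite_index H ->
  (forall x, exists h y, H h /\ gen (fun z => z = g) y /\ x = gmul h y) /\
  (exists p : nat, prime p /\ index_eq (Coc V) p /\
     forall x, exists k : nat, H (gpow x (p ^ k)%N)).
Proof.
move=> hanti [x0 nx0] nfg hG hHs hHn [r hr].
have Ds := @Coc_sub G A V.
have [D1 [DM DV]] := Ds.
have Dn : normal_in (Coc V) (fun _ => True) by move=> x y hx _; exact: CocJ.
have gD : ~ Coc V g.
  move=> Dg; apply: nx0; have [y [c [gy [Dc ->]]]] := hG x0.
  apply: DM => //; exact: (gen_min _ _ Ds (fun _ e => eq_ind_r _ Dg e) y gy).
have keyD : forall K, is_subgroup K -> (forall c, Coc V c -> K c) ->
    (forall x, K x) \/ (forall x, K x -> Coc V x).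
  move=> K hK hDK; apply: (key K [:: g] hanti nfg hK) => x.
  have [y [c [gy [Dc ->]]]] := hG x.
  have [_ [gM _]] := gen_sub (fun y => in_list [:: g] y \/ K y).
  apply: gM.
    apply: (gen_min _ _ (gen_sub _) _ y gy) => _ ->; apply: gen_in; left; by left.
  by apply: gen_in; right; apply: hDK.
have keyH : forall K, is_subgroup K -> (forall c, H c -> K c) ->
    (forall x, K x) \/ (forall x, K x -> Coc V x).
  move=> K hK hHK; apply: (key K r hanti nfg hK) => x.
  have [z [zr hz]] := hr x.
  have [_ [gM _]] := gen_sub (fun y => in_list r y \/ K y).
  rewrite -(gmulKVg z x); apply: gM; apply: gen_in; [by left | right; exact: hHK].
pose P z := Coc V (zpow g z).
have P0 : P 0 by exact: D1.
have PD : forall a b, P a -> P b -> P (a + b) by move=> a b ha hb; rewrite /P zpowD; apply: DM.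
have PN : forall a, P a -> P (- a) by move=> a ha; rewrite /P zpowN; apply: DV.
have P1 : ~ P 1 by rewrite /P zpow1.
have step : forall n : int, P n \/ exists z, P (1 - n * z).
  move=> n; case: (keyD _ (nprod_sub (zpow g n) Ds Dn) (fun c => nprod_N _ c)) => [h|h].
    right; have [c [z [Dc e]]] := h g; exists z.
    rewrite zpowM in e.
    by rewrite /P zpowD zpowN zpow1 {1}e gmulgK.
  left; apply: h; exact: nprod_y _ Ds.
have [w [w0 Pw]] : exists w, w != 0 /\ P w.
  case: (step 2) => [h|[z h]]; first by exists 2.
  exists (1 - 2 * z); split => //; lia.
have [p [p0 hp]] := int_gen P P0 PD PN (ex_intro _ w (conj w0 Pw)).
have p1 : p != 1%N by apply/eqP => e; apply: P1; apply/hp; rewrite e dvd1z.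
have pP : prime p.
  apply/primeP; split; first by lia.
  move=> d dp; rewrite /= -implyNb; apply/implyP => d1.
  have d0 : (0 < d)%N by move: dp; case: d {d1} => //; rewrite dvd0n => /eqP e; move: p0; rewrite e.
  have dp' : (d%:Z %| p%:Z)%Z by rewrite dvdzE.
  case: (step d) => [/hp h|[z /hp h]].
    rewrite dvdzE /= in h; rewrite eqn_leq (dvdn_leq d0 h) andbT; exact: dvdn_leq.
  have h2 : (d%:Z %| 1 - d%:Z * z)%Z := dvdz_trans dp' h.
  have h3 : (d%:Z %| (1 - d%:Z * z) + d%:Z * z)%Z by apply: rpredD => //; apply: dvdz_mulr; apply: dvdzz.
  by move: h3; rewrite subrK dvdz1 /= (negbTE d1).
have hidx : index_eq (Coc V) p.
  exists (List.map (gpow g) (List.seq 0 p)); split; first by rewrite List.length_map List.length_seq.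
  have nthE : forall i, (i < p)%N -> List.nth i (List.map (gpow g) (List.seq 0 p)) gone = gpow g i.
    move=> i hi; change gone with (gpow g 0%N); rewrite List.map_nth List.seq_nth //; exact/ltP.
  split.
    move=> x; have [y [c [gy [Dc ->]]]] := hG x; have [k ->] := gen_zpow _ _ gy.
    have pz : p%:Z != 0 by rewrite -lt0n.
    set j := `|(k %% p%:Z)%Z|%N.
    have ej : j%:Z = (k %% p%:Z)%Z by rewrite gez0_abs // modz_ge0.
    have jp : (j < p)%N by rewrite -ltz_nat ej ltz_pmod // ltz_nat.
    exists (gpow g j); split.
      by apply: List.in_map; apply/List.in_seq; split; [apply/leP | apply/ltP].
    rewrite gpow_zpow -zpowN gmulA -zpowD; apply: DM => //; apply/hp.
    rewrite ej {2}(divz_eq k p%:Z) addrC addrK; exact: dvdz_mull (dvdzz _).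
  move=> i j hi hj; rewrite !nthE // !gpow_zpow -zpowN -zpowD => /hp /dvdzP [q e].
  have : (j%:Z - i%:Z = q * p%:Z) by rewrite addrC.
  move: hi hj; clear -p0 => hi hj e.
  have q0 : q = 0.
    have [h1|[h1|h1]] : 1 <= q \/ q <= -1 \/ q = 0 by lia.
    - nia.
    - nia.
    - done.
  move: e; rewrite q0 mul0r; lia.
have [HN1 [HM HV]] := hHs.
have [hK1|hK1] := keyH _ (nprod_sub g hHs hHn) (fun c => nprod_N g c); last first.
  by exfalso; apply: gD; apply: hK1; exact: nprod_y _ hHs.
split.
  move=> x; have [c [z [Hc ->]]] := hK1 x; exists c, (zpow g z); split => //; split => //.
  exact: zpow_gen.
exists p; split => //; split => //.
pose Q z := H (zpow g z).
have Q0 : Q 0 by exact: HN1.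
have QD : forall a b, Q a -> Q b -> Q (a + b) by move=> a b ha hb; rewrite /Q zpowD; apply: HM.
have QN : forall a, Q a -> Q (- a) by move=> a ha; rewrite /Q zpowN; apply: HV.
have [m [m0 hm]] := int_gen Q Q0 QD QN (pigeon _ _ g _ hHs hr).
have pm : forall q, prime q -> (q %| m)%N -> q = p.
  move=> q qp qm.
  case: (keyH _ (nprod_sub (zpow g q%:Z) hHs hHn) (fun c => nprod_N _ c)) => [h|h].
    exfalso; have [c [z [Hc e]]] := h g.
    rewrite zpowM in e.
    have Q1 : Q (1 - q%:Z * z) by rewrite /Q zpowD zpowN zpow1 {1}e gmulgK.
    move/hm: Q1 => mq.
    have qm' : (q%:Z %| m%:Z)%Z by rewrite dvdzE.
    have h2 : (q%:Z %| 1 - q%:Z * z)%Z := dvdz_trans qm' mq.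
    have h3 : (q%:Z %| (1 - q%:Z * z) + q%:Z * z)%Z by apply: rpredD => //; apply: dvdz_mulr; apply: dvdzz.
    move: h3; rewrite subrK dvdz1 /= => /eqP q1; move: qp; by rewrite q1.
  have /hp := h _ (nprod_y _ hHs); rewrite dvdzE /= => pq.
  by apply/eqP; rewrite eq_sym -dvdn_prime2.
have mp : m = (p ^ logn p m)%N.
  rewrite -p_part part_pnat_id //; apply/pnatP => // q qp qm.
  by rewrite (pm q qp qm) inE.
move=> x; exists (logn p m); rewrite -mp.
have [c [z [Hc ->]]] := hK1 x.
have h1 := pow_coset c (zpow g z) m hHs hHn Hc.
have h2 : H (gpow (zpow g z) m) by rewrite gpow_zpowM; apply/hm; apply: dvdz_mull; apply: dvdzz.
by have := HM _ _ h1 h2; rewrite gmulgKV.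
Qed.

Local Close Scope ring_scope.

Theorem corollary3p3 (G : group) (A : zmodType) (V : ZGmodule G A)
  (g : G) (H : G -> Prop) :
  loc_gen_radical G ->
  minimax_antifinitary V ->
  (exists x, ~ Coc V x) ->
  ~ fin_gen_group G ->
  (* G / Coc(G) is finitely generated *)
  (exists l : list G, forall x, gen (fun y => List.In y l \/ Coc V y) x) ->
  (* G = <g> Coc(G) *)
  (forall x, exists y c, gen (fun z => z = g) y /\ Coc V c /\ x = gmul y c) ->
  (* H normal of finite index *)
  is_subgroup H -> normal_in H (fun _ => True) -> finite_index H ->
  (forall x, exists h y, H h /\ gen (fun z => z = g) y /\ x = gmul h y) /\
  (exists p : nat, prime p /\ index_eq (Coc V) p /\
     forall x, exists k : nat, H (gpow x (p ^ k))).
Proof.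
move=> _ hanti hx nfg _ hG hHs hHn hfi.
exact: (main_aux _ _ _ _ _ hanti hx nfg hG hHs hHn hfi).
Qed.
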